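(* In the curved-exam game described in the context, fix a student $i$ and define $$\phi_i(z):=\Big(m+\tfrac{n-1}{n}(1-z)\Big)^{\alpha_i}\Big(1+\tfrac{nm}{n-1}-z\Big)^{1-\alpha_i}-1 .$$ Then $\phi_i$ has a unique zero $J_i$ in the interval $\big[\frac{nm-\alpha_i}{n-1},\ \frac{nm}{n-1}-\frac{\alpha_i}{n-\alpha_i}\big]$, which is contained in $\big[\frac{nm-1}{n-1},\frac{nm}{n-1}\big]$. Put $x_i^{(L)}(x_{-i}):=\alpha_i-(1-\alpha_i)\big(\frac{nm}{n-1}-\bar x_{-i}\big)$. If $\bar x_{-i}=J_i$, then $U_i(x_i^{(L)},x_{-i})=U_i(\alpha_i,x_{-i})$, the effort $x_i^{(L)}$ makes the curve ($\bar x<m$) and $\alpha_i$ breaks it ($\bar x\ge m$). The best response correspondence $BR_i(x_{-i})=\arg\max_{x_i\in[0,1]}U_i(x_i,x_{-i})$ is $$BR_i(x_{-i})=\begin{cases}\{\alpha_i\} & \text{if } J_i<\bar x_{-i}\le1,\\ \{\alpha_i-(1-\alpha_i)(\frac{nm}{n-1}-J_i),\ \alpha_i\} & \text{if } \bar x_{-i}=J_i,\\ \{\alpha_i-(1-\alpha_i)(\frac{nm}{n-1}-\bar x_{-i})\} & \text{if } \frac{nm}{n-1}-\frac{\alpha_i}{1-\alpha_i}\le\bar x_{-i}<J_i,\\ \{0\} & \text{if } 0\le\bar x_{-i}\le\frac{nm}{n-1}-\frac{\alpha_i}{1-\alpha_i}.\end{cases}$$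
   Context: The curved-exam game: fix $n\ge2$, abilities $\alpha_1,\dots,\alpha_n\in(0,1)$, target mean $m\in(0,1)$. Student $i$ chooses $x_i\in[0,1]$; $x_{-i}=(x_j)_{j\ne i}$; $\bar x=\frac1n\sum_j x_j$, $\bar x_{-i}=\frac1{n-1}\sum_{j\ne i}x_j$. Grade $G_i(x)=x_i+\max(m-\bar x,0)=\max\big(m+\frac{n-1}{n}(x_i-\bar x_{-i}),x_i\big)$ (not truncated at 1); payoff $U_i(x)=G_i(x)^{\alpha_i}(1-x_i)^{1-\alpha_i}$. *)

(* Defs.v *)
(* R : realType; real powers via powR (0 `^ y = 0 for y <> 0). *)
From HB Require Import structures.
From mathcomp Require Import all_boot all_order all_algebra.
From mathcomp Require Import all_classical all_reals.
From mathcomp Require Import exp.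
Set Implicit Arguments. Unset Strict Implicit. Unset Printing Implicit Defensive.
Import Order.TTheory GRing.Theory Num.Theory.
Local Open Scope ring_scope.
Local Open Scope classical_set_scope.

Section CurvedExam.
Variable R : realType.

Definition xbar (n : nat) (x : 'I_n -> R) : R := (\sum_(j < n) x j) / n%:R.

Definition xbar_mi (n : nat) (x : 'I_n -> R) (i : 'I_n) : R :=
  (\sum_(j < n | j != i) x j) / (n%:R - 1).

Definition upd (n : nat) (x : 'I_n -> R) (i : 'I_n) (y : R) : 'I_n -> R :=
  fun j => if j == i then y else x j.

(* grade G_i(x) = x_i + max(m - \bar x, 0)  (not truncated at 1) *)
Definition grade (n : nat) (m : R) (x : 'I_n -> R) (i : 'I_n) : R :=
  x i + Num.max (m - xbar x) 0.

Definition payoff (n : nat) (alpha : 'I_n -> R) (m : R) (x : 'I_n -> R)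
  (i : 'I_n) : R :=
  (grade m x i) `^ (alpha i) * (1 - x i) `^ (1 - alpha i).

Definition BR (n : nat) (alpha : 'I_n -> R) (m : R) (x : 'I_n -> R)
  (i : 'I_n) : set R :=
  [set y | (0 <= y <= 1) /\
     forall z, 0 <= z <= 1 -> payoff alpha m (upd x i z) i <= payoff alpha m (upd x i y) i].

Definition phi (n : nat) (alpha : 'I_n -> R) (m : R) (i : 'I_n) (z : R) : R :=
  (m + (n%:R - 1) / n%:R * (1 - z)) `^ (alpha i)
  * (1 + n%:R * m / (n%:R - 1) - z) `^ (1 - alpha i) - 1.

End CurvedExam.

(* Main.v *)
Require Import Defs.
From HB Require Import structures.
From mathcomp Require Import all_boot all_order all_algebra.
From mathcomp Require Import all_classical all_reals.
From mathcomp Require Import exp.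
From mathcomp Require Import ring lra.
Import Order.TTheory GRing.Theory Num.Theory.
Local Open Scope ring_scope.
Local Open Scope classical_set_scope.
Set Implicit Arguments. Unset Strict Implicit.
Lemma amgm_lt (R : realType) (a s t : R) : 0 < a < 1 -> 0 <= s -> 0 <= t -> s != t ->
  s `^ a * t `^ (1-a) < a*s + (1-a)*t.
Proof.
move=> /andP[a0 a1] s0 t0 st.
have a0' : a != 0 by apply: lt0r_neq0.
have a1' : 1 - a != 0 by apply: lt0r_neq0; lra.
move: (s0); rewrite le_eqVlt => /orP[/eqP s0e|spos].
  rewrite -s0e in st *; rewrite powR0 // mul0r.
  have tpos : 0 < t by rewrite lt_neqAle st t0.
  nra.
move: (t0); rewrite le_eqVlt => /orP[/eqP t0e|tpos].
  rewrite -t0e powR0 // mulr0. nra.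
rewrite /powR (gt_eqF spos) (gt_eqF tpos) -expRD.
set w := a * ln s + (1-a) * ln t.
set E := sequences.expR w.
have lst : ln s != ln t.
  apply: contra st => /eqP h. by rewrite -(lnK spos) -(lnK tpos) h.
have key : a*(E*(1+(ln s-w))) + (1-a)*(E*(1+(ln t-w))) = E by rewrite /w; ring.
have hs : E*(1+(ln s-w)) < s.
  have es : E * sequences.expR (ln s - w) = s by rewrite -expRD addrC subrK lnK.
  suff : E*(1+(ln s-w)) < E * sequences.expR (ln s - w) by rewrite es.
  rewrite ltr_pM2l ?expR_gt0 //; apply: expR_gt1Dx.
  have -> : ln s - w = (1-a) * (ln s - ln t) by rewrite /w; ring.
  by rewrite mulf_neq0 // subr_eq0.
have ht : E*(1+(ln t-w)) <= t.
  have es : E * sequences.expR (ln t - w) = t by rewrite -expRD addrC subrK lnK.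
  suff : E*(1+(ln t-w)) <= E * sequences.expR (ln t - w) by rewrite es.
  rewrite ler_wpM2l ?expR_ge0 //; apply: expR_ge1Dx.
have h1 : a*(E*(1+(ln s-w))) < a * s by rewrite ltr_pM2l.
have h2 : (1-a)*(E*(1+(ln t-w))) <= (1-a) * t by rewrite ler_wpM2l //; lra.
lra.
Qed.

Lemma amgm_le (R : realType) (a s t : R) : 0 < a < 1 -> 0 <= s -> 0 <= t ->
  s `^ a * t `^ (1-a) <= a*s + (1-a)*t.
Proof.
move=> ha s0 t0; have [->|st] := eqVneq s t; last by apply/ltW/amgm_lt.
rewrite -powRD; last by apply/implyP => /eqP; lra.
rewrite addrC subrK powRr1 //; lra.
Qed.

Lemma amgm_ref_lt (R : realType) (a p q p0 q0 : R) : 0 < a < 1 -> 0 <= p -> 0 <= q ->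
  0 < p0 -> 0 < q0 -> p / p0 != q / q0 ->
  p `^ a * q `^ (1-a) < p0 `^ a * q0 `^ (1-a) * (a*(p/p0) + (1-a)*(q/q0)).
Proof.
move=> ha p0' q0' hp hq hne.
have ep : p = p0 * (p/p0) by field; apply: lt0r_neq0.
have eqq : q = q0 * (q/q0) by field; apply: lt0r_neq0.
have hp' : 0 <= p0 by apply: ltW.
have hq' : 0 <= q0 by apply: ltW.
have hpp : 0 <= p / p0 by apply: divr_ge0.
have hqq : 0 <= q / q0 by apply: divr_ge0.
rewrite {1}ep {1}eqq (powRM _ hp' hpp) (powRM _ hq' hqq) mulrACA.
rewrite ltr_pM2l ?mulr_gt0 ?powR_gt0 //.
by apply: amgm_lt => //; apply: divr_ge0 => //; apply: ltW.
Qed.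

Lemma amgm_ref_le (R : realType) (a p q p0 q0 : R) : 0 < a < 1 -> 0 <= p -> 0 <= q ->
  0 < p0 -> 0 < q0 ->
  p `^ a * q `^ (1-a) <= p0 `^ a * q0 `^ (1-a) * (a*(p/p0) + (1-a)*(q/q0)).
Proof.
move=> ha p0' q0' hp hq.
have ep : p = p0 * (p/p0) by field; apply: lt0r_neq0.
have eqq : q = q0 * (q/q0) by field; apply: lt0r_neq0.
have hp' : 0 <= p0 by apply: ltW.
have hq' : 0 <= q0 by apply: ltW.
have hpp : 0 <= p / p0 by apply: divr_ge0.
have hqq : 0 <= q / q0 by apply: divr_ge0.
rewrite {1}ep {1}eqq (powRM _ hp' hpp) (powRM _ hq' hqq) mulrACA.
rewrite ler_wpM2l ?mulr_ge0 ?powR_ge0 //.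
by apply: amgm_le => //; apply: divr_ge0 => //; apply: ltW.
Qed.

Lemma pw_split (R : realType) (x a : R) : 0 <= x -> x `^ a * x `^ (1-a) = x.
Proof.
move=> x0; rewrite -powRD; last by apply/implyP => /eqP; lra.
by rewrite addrC subrK powRr1.
Qed.

Definition Uf (R : realType) (a nr d y : R) : R :=
  (y + Num.max (((nr-1)*d - y)/nr) 0) `^ a * (1-y) `^ (1-a).

Definition Wa (R : realType) (a : R) : R := a `^ a * (1-a) `^ (1-a).

Lemma Uf_curve (R : realType) (a nr d y : R) : 1 < nr -> 0 <= y -> y < (nr-1)*d ->
  Uf a nr d y = ((nr-1)/nr)`^a * ((y+d)`^a * (1-y)`^(1-a)).
Proof.
move=> hn y0 hy; rewrite /Uf max_l; last by apply: divr_ge0; lra.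
have -> : y + ((nr-1)*d - y)/nr = (nr-1)/nr * (y+d).
  by field; apply: lt0r_neq0; lra.
have d0 : 0 < d by nra.
rewrite powRM ?mulrA //; last by lra.
by apply: divr_ge0; lra.
Qed.

Lemma Uf_break (R : realType) (a nr d y : R) : 1 < nr -> (nr-1)*d <= y ->
  Uf a nr d y = y`^a * (1-y)`^(1-a).
Proof.
move=> hn hy; rewrite /Uf max_r ?addr0 //.
by rewrite ler_pdivrMr ?mul0r; lra.
Qed.

Lemma bnd_break (R : realType) (a y : R) : 0 < a < 1 -> 0 <= y <= 1 ->
  y`^a * (1-y)`^(1-a) <= Wa a /\ (y != a -> y`^a * (1-y)`^(1-a) < Wa a).
Proof.
move=> ha hy.
have a0 : 0 < a by lra.
have a1 : 0 < 1 - a by lra.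
have F : a*(y/a) + (1-a)*((1-y)/(1-a)) = 1.
  by field; apply/andP; split; apply: lt0r_neq0.
split.
  by have := amgm_ref_le ha (_ : 0 <= y) (_ : 0 <= 1 - y) a0 a1; rewrite F mulr1 /Wa; apply; lra.
move=> hya.
have := amgm_ref_lt ha (_ : 0 <= y) (_ : 0 <= 1 - y) a0 a1; rewrite F mulr1 /Wa; apply; try lra.
apply: contra hya => /eqP h; apply/eqP.
have e1 : y = (y/a)*a by field; apply: lt0r_neq0.
have e2 : 1-y = ((1-y)/(1-a))*(1-a) by field; apply: lt0r_neq0.
rewrite h in e1; move: e1 e2; set r := (1-y)/(1-a) => e1 e2.
nra.
Qed.

Lemma bnd_curve (R : realType) (a d y : R) : 0 < a < 1 -> 0 <= y <= 1 -> 0 < y + d ->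
  (y+d)`^a * (1-y)`^(1-a) <= Wa a * (1+d) /\
  (y != a - (1-a)*d -> (y+d)`^a * (1-y)`^(1-a) < Wa a * (1+d)).
Proof.
move=> ha hy hyd.
have a0 : 0 < a by lra.
have a1 : 0 < 1 - a by lra.
have d1 : 0 < 1 + d by lra.
have p0 : 0 < a * (1+d) by apply: mulr_gt0.
have q0 : 0 < (1-a) * (1+d) by apply: mulr_gt0.
have F : a*((y+d)/(a*(1+d))) + (1-a)*((1-y)/((1-a)*(1+d))) = 1.
  by field; rewrite !lt0r_neq0.
have V : (a*(1+d))`^a * ((1-a)*(1+d))`^(1-a) = Wa a * (1+d).
  rewrite !powRM ?ltW // mulrACA pw_split ?ltW //.
split.
  by have := amgm_ref_le ha (_ : 0 <= y+d) (_ : 0 <= 1 - y) p0 q0; rewrite F mulr1 V; apply; lra.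
move=> hya.
have := amgm_ref_lt ha (_ : 0 <= y+d) (_ : 0 <= 1 - y) p0 q0; rewrite F mulr1 V; apply; try lra.
apply: contra hya => /eqP h; apply/eqP.
have e1 : y+d = ((y+d)/(a*(1+d)))*(a*(1+d)) by field; rewrite !lt0r_neq0.
have e2 : 1-y = ((1-y)/((1-a)*(1+d)))*((1-a)*(1+d)) by field; rewrite !lt0r_neq0.
rewrite h in e1; move: e1 e2; set r := (1-y)/((1-a)*(1+d)) => e1 e2.
nra.
Qed.

Lemma optval (R : realType) (a d : R) : 0 < a < 1 -> 0 < 1 + d ->
  ((a - (1-a)*d) + d)`^a * (1 - (a - (1-a)*d))`^(1-a) = Wa a * (1+d).
Proof.
move=> ha hd.
have -> : (a - (1-a)*d) + d = a*(1+d) by ring.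
have -> : 1 - (a - (1-a)*d) = (1-a)*(1+d) by ring.
rewrite !powRM ?ltW //; try lra.
by rewrite mulrACA pw_split ?ltW.
Qed.

Lemma bnd_c4 (R : realType) (a d y : R) : 0 < a < 1 -> 0 < y <= 1 -> 0 < d ->
  a <= (1-a)*d -> (y+d)`^a * (1-y)`^(1-a) < d`^a.
Proof.
move=> ha hy hd had.
have h01 : (0:R) < 1 by [].
have := amgm_ref_lt ha (_ : 0 <= y+d) (_ : 0 <= 1 - y) hd h01.
rewrite powR1 mulr1 divr1 => H.
have hlt : 1 < (y+d)/d by rewrite ltr_pdivlMr //; lra.
have {}H := H (ltac:(lra)) (ltac:(lra)) (ltac:(apply/eqP => h; rewrite h in hlt; lra)).
apply: (lt_le_trans H).
rewrite -[leRHS]mulr1 ler_wpM2l ?powR_ge0 //.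
have -> : a*((y+d)/d) = a + y*(a/d) by field; apply: lt0r_neq0.
have : a/d <= 1-a by rewrite ler_pdivrMr //; lra.
nra.
Qed.

Lemma bnd_c4b (R : realType) (a nr d y : R) : 0 < a < 1 -> 2 <= nr -> 0 < d ->
  a <= (1-a)*d -> (nr-1)*d <= y <= 1 ->
  y`^a * (1-y)`^(1-a) < ((nr-1)/nr)`^a * d`^a.
Proof.
move=> ha hn hd had /andP[hy1 hy2].
move: hy1; set t := (nr-1)*d => hy1.
have ht : a < t by rewrite /t; nra.
have kA0 : 0 < ((nr-1)/nr)`^a by apply: powR_gt0; apply: divr_gt0; lra.
have [t1|t1] := leP 1 t.
  have -> : y = 1 by lra.
  rewrite subrr powR0 ?mulr0; last by apply: lt0r_neq0; lra.
  by apply: mulr_gt0 => //; apply: powR_gt0.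
have t0 : 0 < t by lra.
have t0' : 0 < 1 - t by lra.
have S1 : y`^a * (1-y)`^(1-a) <= t`^a * (1-t)`^(1-a).
  have := amgm_ref_le ha (_ : 0 <= y) (_ : 0 <= 1 - y) t0 t0'.
  move=> H; apply: (le_trans (H (ltac:(lra)) (ltac:(lra)))).
  rewrite -[leRHS]mulr1 ler_wpM2l ?mulr_ge0 ?powR_ge0 //.
  have -> : a*(y/t) + (1-a)*((1-y)/(1-t)) = 1 + (y-t)*(a-t)/(t*(1-t)).
    by field; apply/andP; split; apply: lt0r_neq0.
  have : (y-t)*(a-t)/(t*(1-t)) <= 0.
    by rewrite ler_pdivrMr ?mul0r ?mulr_gt0 //; nra.
  lra.
apply: (le_lt_trans S1).
have -> : t = (nr-1)/nr * (t+d) by rewrite /t; field; apply: lt0r_neq0; lra.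
rewrite powRM; last 2 first.
- by apply: divr_ge0; lra.
- lra.
rewrite -mulrA ltr_pM2l //.
have e : (nr - 1) / nr * (t + d) = t by rewrite /t; field; apply: lt0r_neq0; lra.
rewrite e; apply: bnd_c4 => //; lra.
Qed.

Lemma Ucases (R : realType) (a nr d y : R) : 0 < a < 1 -> 1 < nr -> 0 <= y <= 1 ->
  (y < (nr-1)*d /\ 0 < y + d /\
     Uf a nr d y = ((nr-1)/nr)`^a * ((y+d)`^a * (1-y)`^(1-a))) \/
  ((nr-1)*d <= y /\ Uf a nr d y = y`^a * (1-y)`^(1-a)).
Proof.
move=> ha hn hy; have [h|h] := ltP y ((nr-1)*d).
  left; split => //; split; first by nra.
  by apply: Uf_curve => //; lra.
by right; split => //; apply: Uf_break.
Qed.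

Definition Sarg (R : realType) (a nr d : R) : set R :=
  [set y | (0 <= y <= 1) /\ forall z, 0 <= z <= 1 -> Uf a nr d z <= Uf a nr d y].

Lemma Sarg_char (R : realType) (a nr d V : R) (P : set R) :
  (exists z0, P z0) ->
  (forall z, 0 <= z <= 1 -> Uf a nr d z <= V) ->
  (forall z, 0 <= z <= 1 -> ~ P z -> Uf a nr d z < V) ->
  (forall z, P z -> 0 <= z <= 1 /\ Uf a nr d z = V) ->
  Sarg a nr d = P.
Proof.
move=> [z0 Pz0] Hle Hlt Hopt; apply/seteqP; split => y.
  move=> [hy H]; have [//|nPy] := pselect (P y).
  have [hz0 e0] := Hopt z0 Pz0.
  have := H z0 hz0; rewrite e0 => h1.
  have := Hlt y hy nPy; lra.
move=> Py; have [hy e] := Hopt y Py; split => // z hz; rewrite e; exact: Hle.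
Qed.

Lemma Wa_gt0 (R : realType) (a : R) : 0 < a < 1 -> 0 < Wa a.
Proof. move=> ha; rewrite /Wa mulr_gt0 // powR_gt0 //; lra. Qed.

Lemma Ubnd (R : realType) (a nr d z : R) : 0 < a < 1 -> 1 < nr -> 0 <= z <= 1 ->
  (z < (nr-1)*d /\ Uf a nr d z <= ((nr-1)/nr)`^a * (Wa a * (1+d)) /\
     (z != a - (1-a)*d -> Uf a nr d z < ((nr-1)/nr)`^a * (Wa a * (1+d))))
  \/ ((nr-1)*d <= z /\ Uf a nr d z <= Wa a /\ (z != a -> Uf a nr d z < Wa a)).
Proof.
move=> ha hn hz.
have kA0 : 0 < ((nr-1)/nr)`^a by apply: powR_gt0; apply: divr_gt0; lra.
case: (Ucases d ha hn hz) => [[h1 [h2 ->]]|[h1 ->]].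
  left; split => //; have [B1 B2] := bnd_curve ha hz h2; split.
    by rewrite ler_wpM2l // ltW.
  by move=> hne; rewrite ltr_pM2l //; apply: B2.
by right; split => //; apply: bnd_break.
Qed.

Lemma case1 (R : realType) (a nr D : R) (ha : 0 < a < 1) (hn : 2 <= nr)
  (hK : ((nr-1)/nr)`^a * (1+D) = 1) (hD1 : (nr-1)*D <= a) (hD2 : a < (nr-a)*D) (d : R) : d < D -> -1 < d -> Sarg a nr d = [set a].
Proof.
have kA0 : 0 < ((nr-1)/nr)`^a by apply: powR_gt0; apply: divr_gt0; lra.
have W0 : 0 < Wa a by exact: Wa_gt0.
have hn1 : 1 < nr by lra.
have D0 : 0 < D by nra.
move=> hd hd1.
have hk : ((nr-1)/nr)`^a * (1+d) < ((nr-1)/nr)`^a * (1+D) by rewrite ltr_pM2l //; lra.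
rewrite hK in hk.
have hV : ((nr-1)/nr)`^a * (Wa a * (1+d)) < Wa a.
  have -> : ((nr-1)/nr)`^a * (Wa a * (1+d)) = Wa a * (((nr-1)/nr)`^a * (1+d)) by ring.
  by rewrite -[ltRHS]mulr1 ltr_pM2l.
apply: (@Sarg_char _ _ _ _ (Wa a)).
- by exists a.
- move=> z hz; case: (Ubnd d ha hn1 hz) => [[_ [h _]]|[_ [h _]]] //.
  exact: (le_trans h (ltW hV)).
- move=> z hz /= hne; case: (Ubnd d ha hn1 hz) => [[_ [h _]]|[_ [_ h]]].
    exact: (le_lt_trans h hV).
  by apply: h; apply/eqP.
- move=> z /= ->; split; first by lra.
  by rewrite Uf_break //; nra.
Qed.

Lemma case2 (R : realType) (a nr D : R) (ha : 0 < a < 1) (hn : 2 <= nr)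
  (hK : ((nr-1)/nr)`^a * (1+D) = 1) (hD1 : (nr-1)*D <= a) (hD2 : a < (nr-a)*D) : Sarg a nr D = [set a - (1-a)*D] `|` [set a].
Proof.
have kA0 : 0 < ((nr-1)/nr)`^a by apply: powR_gt0; apply: divr_gt0; lra.
have W0 : 0 < Wa a by exact: Wa_gt0.
have hn1 : 1 < nr by lra.
have D0 : 0 < D by nra.
have hV : ((nr-1)/nr)`^a * (Wa a * (1+D)) = Wa a.
  by rewrite mulrCA hK mulr1.
apply: (@Sarg_char _ _ _ _ (Wa a)).
- by exists a; right.
- move=> z hz; case: (Ubnd D ha hn1 hz) => [[_ [h _]]|[_ [h _]]] //.
  by rewrite -hV.
- move=> z hz /= hne; case: (Ubnd D ha hn1 hz) => [[_ [_ h]]|[_ [_ h]]].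
    by rewrite -hV; apply: h; apply/eqP => e; apply: hne; left.
  by apply: h; apply/eqP => e; apply: hne; right.
- move=> z /= [->|->].
    split; first by apply/andP; split; nra.
    rewrite Uf_curve //; last 2 first.
    + nra.
    + nra.
    by rewrite optval //; lra.
  split; first by lra.
  by rewrite Uf_break //; nra.
Qed.

Lemma case3 (R : realType) (a nr D : R) (ha : 0 < a < 1) (hn : 2 <= nr)
  (hK : ((nr-1)/nr)`^a * (1+D) = 1) (hD1 : (nr-1)*D <= a) (hD2 : a < (nr-a)*D) (d : R) : D < d -> d * (1-a) <= a -> Sarg a nr d = [set a - (1-a)*d].
Proof.
have kA0 : 0 < ((nr-1)/nr)`^a by apply: powR_gt0; apply: divr_gt0; lra.
have W0 : 0 < Wa a by exact: Wa_gt0.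
have hn1 : 1 < nr by lra.
have D0 : 0 < D by nra.
move=> hd hd1.
have hk : ((nr-1)/nr)`^a * (1+D) < ((nr-1)/nr)`^a * (1+d) by rewrite ltr_pM2l //; lra.
rewrite hK in hk.
have hV : Wa a < ((nr-1)/nr)`^a * (Wa a * (1+d)).
  have -> : ((nr-1)/nr)`^a * (Wa a * (1+d)) = Wa a * (((nr-1)/nr)`^a * (1+d)) by ring.
  by rewrite -[ltLHS]mulr1 ltr_pM2l.
apply: (@Sarg_char _ _ _ _ (((nr-1)/nr)`^a * (Wa a * (1+d)))).
- by exists (a - (1-a)*d).
- move=> z hz; case: (Ubnd d ha hn1 hz) => [[_ [h _]]|[_ [h _]]] //.
  exact: (le_trans h (ltW hV)).
- move=> z hz /= hne; case: (Ubnd d ha hn1 hz) => [[_ [_ h]]|[_ [h _]]].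
    by apply: h; apply/eqP.
  exact: (le_lt_trans h hV).
- move=> z /= ->.
  split; first by apply/andP; split; nra.
  rewrite Uf_curve //; last 2 first.
  + nra.
  + nra.
  by rewrite optval //; lra.
Qed.



Lemma case4 (R : realType) (a nr d : R) : 0 < a < 1 -> 2 <= nr -> a <= (1-a)*d ->
  Sarg a nr d = [set 0].
Proof.
move=> ha hn hd.
have hn1 : 1 < nr by lra.
have d0 : 0 < d by nra.
have kA0 : 0 < ((nr-1)/nr)`^a by apply: powR_gt0; apply: divr_gt0; lra.
have U0 : Uf a nr d 0 = ((nr-1)/nr)`^a * d`^a.
  rewrite Uf_curve //; last by nra.
  by rewrite add0r subr0 powR1 mulr1.
have Hlt : forall z, 0 <= z <= 1 -> z != 0 -> Uf a nr d z < ((nr-1)/nr)`^a * d`^a.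
  move=> z hz hz0; case: (Ucases d ha hn1 hz) => [[h1 [h2 ->]]|[h1 ->]].
    rewrite ltr_pM2l //; apply: bnd_c4 => //.
    by apply/andP; split; [rewrite lt_neqAle eq_sym hz0; lra | lra].
  by apply: bnd_c4b => //; lra.
apply: (@Sarg_char _ _ _ _ (((nr-1)/nr)`^a * d`^a)).
- by exists 0.
- move=> z hz; have [->|hz0] := eqVneq z 0; first by rewrite U0.
  exact/ltW/Hlt.
- by move=> z hz /= hne; apply: Hlt => //; apply/eqP.
- by move=> z /= ->; split => //; lra.
Qed.

Lemma xbar_upd (R : realType) (n : nat) (x : 'I_n -> R) (i : 'I_n) (y : R) :
  (2 <= n)%N -> xbar (upd x i y) = (y + (n%:R - 1) * xbar_mi x i) / n%:R.
Proof.
move=> hn.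
have hn2 : (2:R) <= n%:R by rewrite (ler_nat R 2 n).
rewrite /xbar (bigD1 i) //= /upd eqxx; congr ((_ + _) / _).
rewrite /xbar_mi mulrC divfK; last by apply: lt0r_neq0; lra.
by apply: eq_bigr => j /negbTE ->.
Qed.

Unset Implicit Arguments. Set Strict Implicit.

Theorem mainTheorem10 (R : realType) (n : nat) (alpha : 'I_n -> R) (m : R)
  (i : 'I_n) :
  (2 <= n)%N ->
  (forall j, 0 < alpha j < 1) ->
  0 < m < 1 ->
  let nr := n%:R : R in
  let c := nr * m / (nr - 1) in
  exists J : R,
    [/\ (nr * m - alpha i) / (nr - 1) <= J <= c - alpha i / (nr - alpha i),
        phi alpha m i J = 0,
        (forall z, (nr * m - alpha i) / (nr - 1) <= z <= c - alpha i / (nr - alpha i) ->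
                   phi alpha m i z = 0 -> z = J),
        (nr * m - 1) / (nr - 1) <= J <= c &
        forall x : 'I_n -> R,
          (forall j, j != i -> 0 <= x j <= 1) ->
          let xb := xbar_mi x i in
          let xL := alpha i - (1 - alpha i) * (c - xb) in
          [/\ xb = J ->
                [/\ payoff alpha m (upd x i xL) i = payoff alpha m (upd x i (alpha i)) i,
                    xbar (upd x i xL) < m &
                    m <= xbar (upd x i (alpha i))],
              J < xb <= 1 -> BR alpha m x i = [set alpha i],
              xb = J -> BR alpha m x i =
                  [set alpha i - (1 - alpha i) * (c - J)] `|` [set alpha i],
              c - alpha i / (1 - alpha i) <= xb < J ->
                  BR alpha m x i = [set xL] &
              0 <= xb <= c - alpha i / (1 - alpha i) ->
                  BR alpha m x i = [set 0]]].
Proof.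
move=> hn halpha hm nr c.
have hnr : 2 <= nr by rewrite /nr (ler_nat R 2 n).
have ha := halpha i.
set a := alpha i in ha *.
have hn1 : 0 < nr - 1 by lra.
have hn0 : 0 < nr by lra.
have cE : c * (nr - 1) = nr * m by rewrite /c divfK //; apply: lt0r_neq0.
have c0 : 0 < c by rewrite /c; apply: divr_gt0 => //; nra.
pose kA := ((nr-1)/nr)`^a.
pose P := (nr/(nr-1))`^a.
have kA0 : 0 < kA by apply: powR_gt0; apply: divr_gt0; lra.
have P0 : 0 < P by apply: powR_gt0; apply: divr_gt0; lra.
have hKP : kA * P = 1.
  rewrite /kA /P -powRM; last 2 first.
  - by apply: divr_ge0; lra.
  - by apply: divr_ge0; lra.
  have -> : (nr - 1) / nr * (nr / (nr - 1)) = 1.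
    by field; apply/andP; split; apply: lt0r_neq0.
  by rewrite powR1.
have hP : P <= a * (nr/(nr-1)) + (1-a) * 1.
  have := amgm_le ha (_ : 0 <= nr/(nr-1)) (_ : 0 <= 1).
  rewrite powR1 mulr1; apply; last by [].
  by apply: divr_ge0; lra.
have hk : kA < a * ((nr-1)/nr) + (1-a) * 1.
  have := amgm_lt ha (_ : 0 <= (nr-1)/nr) (_ : 0 <= 1).
  rewrite powR1 mulr1; apply => //; first by apply: divr_ge0; lra.
  have : (nr-1)/nr < 1 by rewrite ltr_pdivrMr //; lra.
  by move/lt_eqF => ->.
pose D := P - 1.
pose q := a / (nr - 1).
have hq : q * (nr - 1) = a by rewrite /q divfK //; apply: lt0r_neq0.
have e1 : a * (nr/(nr-1)) = a + q by rewrite /q; field; apply: lt0r_neq0.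
have hD1 : (nr-1)*D <= a by rewrite /D; nra.
pose r := a / nr.
have hr : r * nr = a by rewrite /r divfK //; apply: lt0r_neq0.
have e2 : a * ((nr-1)/nr) = a - r by rewrite /r; field; apply: lt0r_neq0.
have hD2 : a < (nr-a)*D.
  have h1 : P * kA < P * (1 - r) by rewrite ltr_pM2l //; lra.
  rewrite mulrC hKP in h1.
  have h2 : nr * 1 < nr * (P * (1 - r)) by rewrite ltr_pM2l.
  rewrite /D; nra.
have hK : kA * (1 + D) = 1 by rewrite /D addrC subrK.
have D0 : 0 < D by nra.
pose J := c - D.
have phiE : forall z, 0 <= 1 + c - z -> phi alpha m i z = kA * (1 + c - z) - 1.
  move=> z hz; rewrite /phi -/nr -/a -/c.
  have -> : m + (nr - 1) / nr * (1 - z) = (nr - 1) / nr * (1 + c - z).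
    rewrite /c; field; apply/andP; split; apply: lt0r_neq0 => //.
  rewrite powRM //; last by apply: divr_ge0; lra.
  by rewrite -mulrA pw_split.
exists J; split.
- have -> : (nr * m - a) / (nr - 1) = c - a / (nr - 1).
    by rewrite /c; field; apply: lt0r_neq0.
  have h1 : D <= a / (nr - 1) by rewrite ler_pdivlMr //; nra.
  have h2 : a / (nr - a) <= D by rewrite ler_pdivrMr; nra.
  by rewrite /J; apply/andP; split; lra.
- rewrite phiE; last by rewrite /J /D; lra.
  have -> : 1 + c - J = P by rewrite /J /D; ring.
  by rewrite hKP subrr.
- move=> z /andP[hz1 hz2] hz.
  have h2 : 0 <= a / (nr - a) by apply: divr_ge0; lra.
  rewrite phiE in hz; last by lra.
  have : kA * (1 + c - z) = kA * P by rewrite hKP; lra.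
  move/(mulfI (lt0r_neq0 kA0)) => h.
  by rewrite /J /D; lra.
- have -> : (nr * m - 1) / (nr - 1) = c - 1 / (nr - 1).
    by rewrite /c; field; apply: lt0r_neq0.
  have h1 : D <= 1 / (nr - 1) by rewrite ler_pdivlMr //; nra.
  by rewrite /J; apply/andP; split; lra.
move=> x hx xb xL.
have hpay : forall y, payoff alpha m (upd x i y) i = Uf a nr (c - xb) y.
  move=> y; rewrite /payoff /grade xbar_upd // -/nr -/xb.
  have -> : upd x i y i = y by rewrite /upd eqxx.
  rewrite /Uf; congr (((_ + Num.max _ _) `^ _) * _).
  rewrite /c; field; apply/andP; split; apply: lt0r_neq0 => //.
have hBR : BR alpha m x i = Sarg a nr (c - xb).
  rewrite /BR /Sarg; apply/seteqP; split => y [hy H]; split => // z hz.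
    by rewrite -!hpay; apply: H.
  by rewrite !hpay; apply: H.
have hxbar : forall y, xbar (upd x i y) = (y + (nr - 1) * xb) / nr.
  by move=> y; rewrite xbar_upd.
split.
- move=> hxb.
  have hd : c - xb = D by rewrite hxb /J; ring.
  have hxL : xL = a - (1 - a) * D by rewrite /xL -/a -/xb hd.
  rewrite !hpay hd !hxbar hxL; split.
  + rewrite Uf_curve; [|lra|nra|nra].
    rewrite optval //; last by lra.
    rewrite Uf_break; [|lra|lra].
    by rewrite mulrCA -/kA hK mulr1.
  + by rewrite ltr_pdivrMr // hxb /J; nra.
  + by rewrite ler_pdivlMr // hxb /J; nra.
- move=> /andP[h1 h2]; rewrite hBR; apply: (case1 ha hnr hK hD1 hD2); rewrite /J in h1; lra.
- move=> hxb.
  have hd : c - xb = D by rewrite hxb /J; ring.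
  have -> : c - J = D by rewrite /J; ring.
  by rewrite hBR hd; apply: (case2 ha hnr hK hD1 hD2).
- move=> /andP[h1 h2]; rewrite hBR /xL -/a -/xb.
  have h3 : c - xb <= a / (1 - a) by lra.
  rewrite ler_pdivlMr in h3; last by lra.
  by apply: (case3 ha hnr hK hD1 hD2); rewrite /J in h2; lra.
- move=> /andP[h1 h2]; rewrite hBR.
  have h3 : a / (1 - a) <= c - xb by lra.
  rewrite ler_pdivrMr in h3; last by lra.
  by apply: case4 => //; lra.
Qed.
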